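(* Up to homeomorphism, the Sorgenfrey line is the unique Hausdorff topological space that has a Sorgenfrey base which is locally strict and has strict branches.
   Context: The Sorgenfrey line is $\mathbb R$ with the topology generated by $\{[a,b)\}$. Notation: ${}^{<\omega}\omega$, ${}^\omega\omega$ finite/infinite sequences of naturals; $a^\frown k$ extends $a$ by $k$; $a\triangleleft b$ iff there is $n$ in both domains with $a\upharpoonright n=b\upharpoonright n$ and $a(n)<b(n)$. A Souslin scheme on $X$ is a family $\mathbf V=\langle V_a\rangle_{a\in{}^{<\omega}\omega}$ of subsets of $X$; $\mathrm{fruit}(\mathbf V,p)=\bigcap_nV_{p\upharpoonright n}$; covering: $V_{\langle\rangle}=X$ and $V_a=\bigcup_nV_{a^\frown n}$; complete: all fruits nonempty; open: all $V_a$ open; has strict branches: every fruit is a singleton; locally strict: $V_a=\bigcup_nV_{a^\frown n}$ and $V_{a^\frown m}\cap V_{a^\frown k}=\emptyset$ for all $a$ and $m\ne k$. $\mathrm{branches}(\mathbf V,x)=\{q: x\in\mathrm{fruit}(\mathbf V,q)\}$; $\mathrm{rsequences}(q,n)=\{p:q\triangleleft p,\ q\upharpoonright n=p\upharpoonright n\}$; $\mathrm{cut}(\mathbf V,q,n)=\bigcup\{\mathrm{fruit}(\mathbf V,p):p\in\mathrm{rsequences}(q,n)\}$. A branch $q$ of $x$ is a $\tau$-base branch of $x$ if $\{\mathrm{cut}(\mathbf V,q,m)\cup\{x\}:m\in\omega\}$ is an open neighborhood base at $x$; $\mathrm{BB}(\mathbf V,x,\tau)$ is the set of these. A Sorgenfrey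 base for a Hausdorff $\langle X,\tau\rangle$ is an open complete covering Souslin scheme with (S1) for all $x$, $q\in\mathrm{branches}(\mathbf V,x)$, $n$, some $t\in\mathrm{BB}(\mathbf V,x,\tau)$ has $t\upharpoonright n=q\upharpoonright n$; (S2) every $q\in{}^\omega\omega$ lies in $\mathrm{BB}(\mathbf V,z,\tau)$ for some $z$. *)

(* Defs.v *)
From mathcomp Require Import all_boot all_order all_algebra.
From mathcomp Require Import all_classical all_reals all_analysis.
Set Implicit Arguments. Unset Strict Implicit. Unset Printing Implicit Defensive.
Import Order.TTheory GRing.Theory Num.Theory.
Local Open Scope classical_set_scope.
Local Open Scope ring_scope.

(* Finite sequences of naturals: seq nat; infinite ones: nat -> nat.
   The restriction p|n of an infinite sequence is mkseq p n;
   a^k is rcons a k. *)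

Section Souslin.
Variable X : topologicalType.

Definition fruit (V : seq nat -> set X) (p : nat -> nat) : set X :=
  [set x | forall n : nat, V (mkseq p n) x].

Definition scheme_covering (V : seq nat -> set X) : Prop :=
  V [::] = setT /\ forall a : seq nat, V a = \bigcup_(n in [set: nat]) V (rcons a n).

Definition scheme_complete (V : seq nat -> set X) : Prop :=
  forall p : nat -> nat, fruit V p !=set0.

Definition scheme_open (V : seq nat -> set X) : Prop :=
  forall a : seq nat, open (V a).

Definition strict_branches (V : seq nat -> set X) : Prop :=
  forall p : nat -> nat, exists x : X, fruit V p = [set x].

Definition locally_strict (V : seq nat -> set X) : Prop :=
  (forall a : seq nat, V a = \bigcup_(n in [set: nat]) V (rcons a n)) /\
  (forall (a : seq nat) (m k : nat), m <> k -> V (rcons a m) `&` V (rcons a k) = set0).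

Definition seq_tri (a b : nat -> nat) : Prop :=
  exists n : nat, (forall i : nat, (i < n)%N -> a i = b i) /\ (a n < b n)%N.

Definition branches (V : seq nat -> set X) (x : X) : set (nat -> nat) :=
  [set q | fruit V q x].

Definition rsequences (q : nat -> nat) (n : nat) : set (nat -> nat) :=
  [set p | seq_tri q p /\ mkseq q n = mkseq p n].

Definition cut (V : seq nat -> set X) (q : nat -> nat) (n : nat) : set X :=
  \bigcup_(p in rsequences q n) fruit V p.

Definition BB (V : seq nat -> set X) (x : X) : set (nat -> nat) :=
  [set q | branches V x q /\
     (forall m : nat, open (cut V q m `|` [set x])) /\
     (forall U : set X, open U -> U x ->
        exists m : nat, cut V q m `|` [set x] `<=` U)].

Definition sorgenfrey_base (V : seq nat -> set X) : Prop :=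
  [/\ scheme_open V, scheme_complete V, scheme_covering V,
      (forall (x : X) (q : nat -> nat) (n : nat), branches V x q ->
         exists t : nat -> nat, BB V x t /\ mkseq t n = mkseq q n) &
      (forall q : nat -> nat, exists z : X, BB V z q)].

End Souslin.

Definition sorgenfrey_open (R : realType) (A : set R) : Prop :=
  forall x : R, A x -> exists y : R, x < y /\ [set z | x <= z < y] `<=` A.

Definition homeomorphic_to_sorgenfrey (R : realType) (X : topologicalType) : Prop :=
  exists f : X -> R, bijective f /\
    forall A : set X, open A <-> sorgenfrey_open (f @` A).

(* Main.v *)
Require Import Defs.
From mathcomp Require Import all_boot all_order all_algebra.
From mathcomp Require Import all_classical all_reals all_analysis.
From mathcomp Require Import lra zify.
Import Order.TTheory GRing.Theory Num.Theory.
Import numFieldNormedType.Exports.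
Set Implicit Arguments. Unset Strict Implicit.
Local Open Scope classical_set_scope.
Local Open Scope ring_scope.

Lemma mkseq_eqP (p q : nat -> nat) n :
  mkseq p n = mkseq q n <-> forall i, (i < n)%N -> p i = q i.
Proof.
split.
- move=> E i Hi; have := congr1 (fun s => nth 0%N s i) E.
  by rewrite !nth_mkseq.
- move=> H; apply: (@eq_from_nth _ 0%N); first by rewrite !size_mkseq.
  move=> i; rewrite size_mkseq => Hi; rewrite !nth_mkseq //; exact: H.
Qed.

Section Generic.
Variable T : Type.
Variable W : seq nat -> set T.

Lemma branch_ex y : W [::] y -> (forall a, W a y -> exists k, W (rcons a k) y) ->
  exists p : nat -> nat, forall n, W (mkseq p n) y.
Proof.
move=> W0 Hs.
have : forall a : seq nat, exists k : nat, W a y -> W (rcons a k) y.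
  move=> a; case: (pselect (W a y)) => Ha.
  - by have [k Hk] := Hs a Ha; exists k.
  - by exists 0%N.
move=> /boolp.choice [nx Hnx].
pose s := fix s n := if n is n'.+1 then rcons (s n') (nx (s n')) else [::].
have sz : forall n, size (s n) = n.
  by elim=> [|n IH] //=; rewrite size_rcons IH.
exists (fun n => nx (s n)).
have E : forall n, mkseq (fun n => nx (s n)) n = s n.
  elim=> [|n IH] //; by rewrite mkseqS IH.
move=> n; rewrite E; elim: n => [|n IH] //=; exact: Hnx.
Qed.

Hypothesis nest : forall a k, W (rcons a k) `<=` W a.
Hypothesis disj : forall a m k, m <> k -> W (rcons a m) `&` W (rcons a k) = set0.

Lemma seq_uniq p q n y : W (mkseq p n) y -> W (mkseq q n) y ->
  mkseq p n = mkseq q n.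
Proof.
elim: n => [|n IH] // Hp Hq.
rewrite !mkseqS in Hp Hq *.
have E := IH (nest Hp) (nest Hq).
rewrite E in Hp *; congr rcons.
case: (pselect (p n = q n)) => // ne.
have H := disj (mkseq q n) ne.
have : (W (rcons (mkseq q n) (p n)) `&` W (rcons (mkseq q n) (q n))) y by split.
by rewrite H.
Qed.

Lemma branch_uniq p q y : (forall n, W (mkseq p n) y) -> (forall n, W (mkseq q n) y) ->
  p = q.
Proof.
move=> Hp Hq; apply: funext => i.
have := seq_uniq (Hp i.+1) (Hq i.+1).
by move/mkseq_eqP; apply.
Qed.
End Generic.

Section RealSide.
Context {R : realType}.

Definition zz (k : nat) : int := if odd k then Negz k./2 else Posz k./2.

Lemma zz_surj (z : int) : exists k, zz k = z.
Proof.
case: z => n.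
- by exists n.*2; rewrite /zz odd_double doubleK.
- by exists n.*2.+1; rewrite /zz /= odd_double /= uphalf_double.
Qed.

Lemma zz_inj : injective zz.
Proof.
move=> j k; rewrite /zz.
case: (boolP (odd j)) => oj; case: (boolP (odd k)) => ok //= E.
- case: E => E; by rewrite -(odd_double_half j) -(odd_double_half k) oj ok E.
- case: E => E; by rewrite -(odd_double_half j) -(odd_double_half k) (negbTE oj) (negbTE ok) E.
Qed.

Lemma divn_le (d : R) m n : 0 < d -> (0 < m)%N -> (m <= n)%N -> d / n%:R <= d / m%:R.
Proof.
move=> d0 m0 mn; rewrite ler_pM2l // lef_pV2 ?ler_nat // posrE ltr0n //.
exact: leq_trans mn.
Qed.

Lemma divn_lt (d : R) m n : 0 < d -> (0 < m)%N -> (m < n)%N -> d / n%:R < d / m%:R.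
Proof.
move=> d0 m0 mn; rewrite ltr_pM2l // ltf_pV2 ?ltr_nat // posrE ltr0n //.
exact: ltn_trans mn.
Qed.

Lemma divn_pos (d : R) m : 0 < d -> (0 < m)%N -> 0 < d / m%:R.
Proof. by move=> d0 m0; rewrite divr_gt0 // ltr0n. Qed.

Definition piece (ab : R * R) (k : nat) : R * R :=
  (ab.2 - (ab.2 - ab.1) / k.+1%:R, ab.2 - (ab.2 - ab.1) / k.+2%:R).

Section Piece.
Variables a b : R.
Hypothesis ab : a < b.
Let d := b - a.
Let d0 : 0 < d. Proof. by rewrite subr_gt0. Qed.

Lemma piece_lt k : (piece (a, b) k).1 < (piece (a, b) k).2.
Proof. rewrite /piece /= ltrD2l ltrN2; exact: divn_lt. Qed.

Lemma piece_ge k : a <= (piece (a, b) k).1.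
Proof.
rewrite /piece /=. have := divn_le (m:=1) (n:=k.+1) d0 isT isT.
rewrite /d => H.
have H' : (b - a) / k.+1%:R <= b - a by move: H; rewrite divr1.
move: H'; generalize ((b - a) / k.+1%:R) => t; lra.
Qed.

Lemma piece_hi k : (piece (a, b) k).2 < b.
Proof.
rewrite /piece /=. have := divn_pos (m:=k.+2) d0 isT. rewrite /d.
generalize ((b - a) / k.+2%:R) => t; lra.
Qed.

Lemma piece_len k : (piece (a, b) k).2 - (piece (a, b) k).1 <= (b - a) / 2.
Proof.
rewrite /piece /=.
have h2 := divn_pos (m:=k.+2) d0 isT.
case: k h2 => [|k] h2.
- rewrite divr1 /=. move: h2; rewrite /d.
  have E : (b - a) / 2 * 2 = b - a by rewrite mulrVK // unitfE.
  move: E; generalize ((b - a) / 2) => t; lra.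
- have := divn_le (m:=2) (n:=k.+2) d0 isT isT. move: h2; rewrite /d.
  generalize ((b - a) / k.+3%:R) ((b - a) / k.+2%:R) ((b - a) / 2%:R) => t u v; lra.
Qed.

Lemma piece_ord j k : (j < k)%N -> (piece (a, b) j).2 <= (piece (a, b) k).1.
Proof.
move=> jk; rewrite /piece /= -/d lerD2l lerN2; exact: divn_le.
Qed.

Lemma piece_cover y : a <= y < b -> exists k, (piece (a, b) k).1 <= y < (piece (a, b) k).2.
Proof.
move=> /andP[ay yb].
have by0 : 0 < b - y by rewrite subr_gt0.
set r := d / (b - y).
have r1 : 1 <= r by rewrite /r ler_pdivlMr // mul1r /d; lra.
have r0 : 0 <= r by lra.
have /andP[t1 t2] := truncn_itv r0.
have tpos : (0 < Num.truncn r)%N by rewrite truncn_gt_nat.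
exists (Num.truncn r).-1; rewrite /piece /= -/d prednK //; apply/andP; split.
- suff : d / (Num.truncn r)%:R >= b - y by rewrite /d; generalize ((b - a) / (Num.truncn r)%:R) => t; lra.
  rewrite ler_pdivlMr ?ltr0n // mulrC -ler_pdivlMr //.
- suff : d / (Num.truncn r).+1%:R < b - y by rewrite /d; generalize ((b - a) / (Num.truncn r).+1%:R) => t; lra.
  rewrite ltr_pdivrMr ?ltr0n // mulrC -ltr_pdivrMr //.
Qed.
End Piece.

Definition intv (a : seq nat) : R * R :=
  if a is k :: s then foldl piece ((zz k)%:~R, (zz k)%:~R + 1) s else (0, 1).
Definition lo a := (intv a).1.
Definition hi a := (intv a).2.
Definition Iv (a : seq nat) : set R :=
  if a is [::] then setT else [set y | lo a <= y < hi a].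

Lemma intv_rcons a k : a <> [::] -> intv (rcons a k) = piece (intv a) k.
Proof. by case: a => // k0 s _; rewrite /= foldl_rcons. Qed.

Lemma intv_pair a : intv a = (lo a, hi a).
Proof. by rewrite /lo /hi; case: (intv a). Qed.

Lemma lo_lt_hi a : lo a < hi a.
Proof.
elim/last_ind: a => [|a k IH]; first by rewrite /lo /hi /= ltr01.
case: (pselect (a = [::])) => [->|na].
- by rewrite /lo /hi /= ltrDl ltr01.
- by rewrite /lo /hi intv_rcons // intv_pair; apply: piece_lt.
Qed.

Lemma lo_rcons a k : a <> [::] -> lo a <= lo (rcons a k).
Proof.
move=> na; rewrite {2}/lo intv_rcons // intv_pair; apply: piece_ge; exact: lo_lt_hi.
Qed.

Lemma hi_rcons a k : a <> [::] -> hi (rcons a k) < hi a.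
Proof.
move=> na; rewrite {1}/hi intv_rcons // intv_pair; apply: piece_hi; exact: lo_lt_hi.
Qed.

Lemma len_rcons a k : a <> [::] -> hi (rcons a k) - lo (rcons a k) <= (hi a - lo a) / 2.
Proof.
move=> na; rewrite /hi /lo intv_rcons // intv_pair; apply: piece_len; exact: lo_lt_hi.
Qed.

Lemma len_bound a : a <> [::] -> hi a - lo a <= (size a)%:R^-1.
Proof.
elim/last_ind: a => [//|a k IH] _.
case: (pselect (a = [::])) => [->|na].
- rewrite /lo /hi /= invr1. rewrite addrAC subrr add0r //.
- have H1 := len_rcons k na. have H2 := IH na.
  have s1 : (0 < size a)%N by case: a na {IH H1 H2} => //.
  apply: (le_trans H1); rewrite size_rcons.
  apply: (le_trans (y := (size a)%:R^-1 / 2)).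
    by rewrite ler_pM2r // invr_gt0 ltr0n.
  rewrite -invfM -natrM lef_pV2 ?posrE ?ltr0n ?muln_gt0 ?s1 // ler_nat.
  by rewrite muln2 -addnn -{1}[size a]addn0 ltn_add2l.
Qed.

Lemma Iv_nest a k : Iv (rcons a k) `<=` Iv a.
Proof.
case: (pselect (a = [::])) => [->//|na] y.
have : rcons a k <> [::] by case: a na.
case: (rcons a k) (lo_rcons k na) (hi_rcons k na) => [//|k' s'] H1 H2 _.
case: a na H1 H2 => [//|k0 s0] _ H1 H2 /= /andP[u v]; apply/andP; split.
- exact: le_trans u.
- exact: lt_trans H2.
Qed.

Lemma Iv_rcons_eq a k y : Iv (rcons a k) y = (lo (rcons a k) <= y < hi (rcons a k)).
Proof. by case: a => [|k0 s]. Qed.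

Lemma Iv_cover a y : Iv a y -> exists k, Iv (rcons a k) y.
Proof.
case: (pselect (a = [::])) => [->|na] Hy.
- have [k Hk] := zz_surj (Num.floor y).
  exists k; rewrite Iv_rcons_eq //.
  have E : intv (rcons [::] k) = ((zz k)%:~R, (zz k)%:~R + 1) by [].
  rewrite /lo /hi E /= Hk.
  have := floor_itv y; by rewrite intrD.
- have H : lo a <= y < hi a by case: a na Hy.
  have [k Hk] := piece_cover H.
  exists k; rewrite Iv_rcons_eq // /lo /hi intv_rcons // intv_pair //.
Qed.

Lemma Iv_ord a j k y z : a <> [::] -> (j < k)%N -> Iv (rcons a j) y -> Iv (rcons a k) z -> y < z.
Proof.
move=> na jk; rewrite !Iv_rcons_eq // /lo /hi !intv_rcons // intv_pair.
have := piece_ord (lo_lt_hi a) jk.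
move=> H /andP[_ u] /andP[v _].
apply: (lt_le_trans u); exact: le_trans v.
Qed.

Lemma Iv_disj a m k : m <> k -> Iv (rcons a m) `&` Iv (rcons a k) = set0.
Proof.
move=> mk; apply/seteqP; split=> [y [H1 H2]|//].
case: (pselect (a = [::])) => [E|na].
- move: H1 H2; rewrite E /= /lo /hi /=.
  move=> /andP[u1 v1] /andP[u2 v2].
  have : zz m <> zz k by move/zz_inj.
  have A : ((zz m)%:~R : R) < (zz k + 1)%:~R by rewrite intrD; exact: le_lt_trans v2.
  have B : ((zz k)%:~R : R) < (zz m + 1)%:~R by rewrite intrD; exact: le_lt_trans v1.
  rewrite ltr_int in A; rewrite ltr_int in B.
  move: A B; generalize (zz m) (zz k) => u v A B nuv; clear -A B nuv; lia.
- case: (ltngtP m k) => h.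
  + have := Iv_ord na h H1 H2; by rewrite ltxx.
  + have := Iv_ord na h H2 H1; by rewrite ltxx.
  + by [].
Qed.

Lemma Iv_cov_eq a : Iv a = \bigcup_(n in [set: nat]) Iv (rcons a n).
Proof.
apply/seteqP; split=> y.
- by move=> /Iv_cover [k Hk]; exists k.
- by move=> [k _]; apply: Iv_nest.
Qed.

Definition L (p : nat -> nat) n := lo (mkseq p n.+1).
Definition H (p : nat -> nat) n := hi (mkseq p n.+1).

Lemma mk_nn (p : nat -> nat) n : mkseq p n.+1 <> [::].
Proof. by rewrite mkseqS => /(congr1 size); rewrite size_rcons. Qed.

Lemma Iv_mk p n y : Iv (mkseq p n.+1) y = (L p n <= y < H p n).
Proof. by rewrite /L /H mkseqS Iv_rcons_eq. Qed.

Lemma L_mono p i d : L p i <= L p (i + d).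
Proof.
elim: d => [|d IH]; first by rewrite addn0.
apply: (le_trans IH); rewrite addnS /L [mkseq p (i + d).+2]mkseqS.
by apply: lo_rcons; exact: mk_nn.
Qed.

Lemma H_mono p i d : H p (i + d) <= H p i.
Proof.
elim: d => [|d IH]; first by rewrite addn0.
apply: le_trans IH; rewrite addnS /H [mkseq p (i + d).+2]mkseqS.
exact/ltW/hi_rcons/mk_nn.
Qed.

Lemma L_lt_H p i j : L p i < H p j.
Proof.
have Hi := L_mono p i (maxn i j - i).
have Hj := H_mono p j (maxn i j - j).
rewrite subnKC ?leq_maxl // in Hi; rewrite subnKC ?leq_maxr // in Hj.
apply: (le_lt_trans Hi); apply: (lt_le_trans _ Hj); exact: lo_lt_hi.
Qed.

Definition gfun (p : nat -> nat) : R := sup (range (L p)).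

Lemma gfun_hs p : has_sup (range (L p)).
Proof.
split; first by exists (L p 0), 0%N.
exists (H p 0) => x [n _ <-]; exact/ltW/L_lt_H.
Qed.

Lemma gfun_ge p n : L p n <= gfun p.
Proof. by apply: (sup_upper_bound (gfun_hs p)); exists n. Qed.

Lemma gfun_le p n : gfun p <= H p n.
Proof.
apply: ge_sup; first by exists (L p 0), 0%N.
move=> x [i _ <-]; exact/ltW/L_lt_H.
Qed.

Lemma gfun_in p n : Iv (mkseq p n) (gfun p).
Proof.
case: n => [//|n]; rewrite Iv_mk gfun_ge /=.
apply: (le_lt_trans (gfun_le p n.+1)).
rewrite /H [mkseq p n.+2]mkseqS; exact/hi_rcons/mk_nn.
Qed.

Lemma len_mk p n : H p n - L p n <= n.+1%:R^-1.
Proof. by have := len_bound (@mk_nn p n); rewrite size_mkseq. Qed.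

Lemma fruit_Iv p : fruit Iv p = [set gfun p].
Proof.
apply/seteqP; split => y; last by move=> ->; exact: gfun_in.
move=> Hy; rewrite /=.
have key : forall u v : R, (forall n, Iv (mkseq p n.+1) u) -> (forall n, Iv (mkseq p n.+1) v) -> ~ (u < v).
  move=> u v Hu Hv uv.
  have [k Hk] := ltr_add_invr uv.
  have := Hu k; have := Hv k; rewrite !Iv_mk => /andP[_ v2] /andP[u1 _].
  have Hl := len_mk p k.
  set t := (k.+1%:R^-1 : R) in Hk Hl; clearbody t; lra.
have Hy' : forall n, Iv (mkseq p n.+1) y by move=> n; exact: Hy.
have Hg : forall n, Iv (mkseq p n.+1) (gfun p) by move=> n; exact: gfun_in.
case: (ltgtP y (gfun p)) => // h.
- by case: (key _ _ Hy' Hg h).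
- by case: (key _ _ Hg Hy' h).
Qed.

Lemma fruit_Iv_eq p y : fruit Iv p y -> y = gfun p.
Proof. by rewrite fruit_Iv. Qed.

Lemma Iv_branch y : exists p, fruit Iv p y.
Proof.
have [p Hp] := branch_ex (W := Iv) (y := y) I (fun a Ha => Iv_cover Ha).
by exists p.
Qed.

Lemma gfun_surj y : exists p, y = gfun p.
Proof. by have [p Hp] := Iv_branch y; exists p; exact: fruit_Iv_eq. Qed.

Lemma Iv_seq_uniq p q n y : Iv (mkseq p n) y -> Iv (mkseq q n) y -> mkseq p n = mkseq q n.
Proof. exact: (seq_uniq Iv_nest Iv_disj). Qed.

Lemma gfun_inj : injective gfun.
Proof.
move=> p q E; apply: (branch_uniq Iv_nest Iv_disj (y := gfun p)).
- exact: gfun_in.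
- by rewrite E; exact: gfun_in.
Qed.

Lemma gfun_lt p q d : (0 < d)%N -> (forall i, (i < d)%N -> p i = q i) -> (p d < q d)%N ->
  gfun p < gfun q.
Proof.
move=> d0 E lt.
have Ea : mkseq p d = mkseq q d by apply/mkseq_eqP.
have na : mkseq p d <> [::] by case: d d0 {E lt Ea} => // d _; exact: mk_nn.
have Hp := gfun_in p d.+1; have Hq := gfun_in q d.+1.
rewrite mkseqS in Hp; rewrite mkseqS -Ea in Hq.
exact: (Iv_ord na lt Hp Hq).
Qed.

Lemma cut_Iv q m z : Defs.cut Iv q m z <-> exists2 p, rsequences q m p & z = gfun p.
Proof.
split.
- by move=> [p Hp Hz]; exists p => //; exact: fruit_Iv_eq.
- by move=> [p Hp ->]; exists p => //; exact: gfun_in.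
Qed.

Lemma tri_ge q p m d : mkseq q m = mkseq p m -> (q d < p d)%N -> (m <= d)%N.
Proof.
move=> /mkseq_eqP E lt; rewrite leqNgt; apply/negP => dm.
by rewrite (E d dm) ltnn in lt.
Qed.

Lemma cut_sub q m z : Defs.cut Iv q m.+1 z -> gfun q < z < H q m.
Proof.
move=> /cut_Iv [p [[d [E1 E2]] E3] ->].
have dm := tri_ge E3 E2.
have d0 : (0 < d)%N by exact: leq_trans (ltn0Sn m) dm.
rewrite (gfun_lt d0 E1 E2) /=.
have := gfun_in p m.+1; rewrite -E3 Iv_mk => /andP[_ ->] //.
Qed.

Lemma first_diff (p q : nat -> nat) : p <> q -> exists d, (forall i, (i < d)%N -> q i = p i) /\ p d <> q d.
Proof.
move=> ne.
have ex : exists d, p d != q d.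
  apply: contra_notP ne => h; apply: funext => i.
  by apply/eqP; apply: contra_notT h => hi; exists i.
case: (ex_minnP ex) => d /eqP Hd Hmin; exists d; split => // i id.
apply/esym/eqP; apply: contraTT id => hi; rewrite -leqNgt; exact: Hmin.
Qed.

Lemma cut_intv q m z : gfun q <= z < H q m -> z <> gfun q -> Defs.cut Iv q m z.
Proof.
move=> /andP[z1 z2] nz.
have [p Hp] := Iv_branch z.
have Ez := fruit_Iv_eq Hp.
have Iq : Iv (mkseq q m.+1) z.
  by rewrite Iv_mk z2 andbT; exact: le_trans (gfun_ge q m) z1.
have Es := Iv_seq_uniq (Hp m.+1) Iq.
have npq : p <> q by move=> epq; apply: nz; rewrite Ez epq.
have [d [Ed Nd]] := first_diff npq.
apply/cut_Iv; exists p => //; split.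
- exists d; split => //.
  case: (ltngtP (q d) (p d)) => // h.
  + have dm : (m.+1 <= d)%N.
      rewrite leqNgt; apply/negP => dm; apply: Nd; by move/mkseq_eqP: Es; apply.
    have := gfun_lt (leq_trans (ltn0Sn m) dm) (fun i hi => esym (Ed i hi)) h.
    by rewrite -Ez ltNge z1.
  + by case: Nd.
- apply/mkseq_eqP => i im; move/mkseq_eqP: Es => Es; rewrite Es //; exact: ltnW.
Qed.

Lemma cut_open q m : sorgenfrey_open (Defs.cut Iv q m `|` [set gfun q]).
Proof.
move=> x [Hx|->].
- have [p [[d [E1 E2]] E3] ->] := (cut_Iv q m x).1 Hx.
  have dm := tri_ge E3 E2.
  exists (H p d); split.
    by have := gfun_in p d.+1; rewrite Iv_mk => /andP[].
  move=> z /andP[z1 z2]; left.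
  have Iz : Iv (mkseq p d.+1) z by rewrite Iv_mk z2 andbT; exact: le_trans (gfun_ge p d) z1.
  have [p' Hp'] := Iv_branch z.
  have Es := Iv_seq_uniq (Hp' d.+1) Iz.
  move/mkseq_eqP: Es => Es.
  apply/cut_Iv; exists p'; last exact: fruit_Iv_eq.
  split.
  + exists d; split; first by move=> i id; rewrite E1 // Es // ltnW.
    by rewrite Es.
  + apply/mkseq_eqP => i im; move/mkseq_eqP: E3 => E3.
    rewrite E3 // Es //; exact: leq_trans im (leq_trans dm (leqnSn d)).
- exists (H q m); split.
    by have := gfun_in q m.+1; rewrite Iv_mk => /andP[].
  move=> z Hz.
  case: (pselect (z = gfun q)) => [->|nz]; first by right.
  by left; apply: cut_intv.
Qed.

Lemma small_m q e : 0 < e -> exists m, H q m <= gfun q + e.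
Proof.
move=> e0; have [k Hk] := ltr_add_invr e0; rewrite add0r in Hk.
exists k; have Hl := len_mk q k; have := gfun_ge q k.
set t := (k.+1%:R^-1 : R) in Hk Hl; clearbody t; lra.
Qed.

Lemma Iv_sopen a : sorgenfrey_open (Iv a).
Proof.
case: a => [|k s].
- by move=> x _; exists (x + 1); split; [lra|].
- move=> x /andP[x1 x2]; exists (hi (k :: s)); split => // z /andP[z1 z2].
  by rewrite /= z2 andbT; exact: le_trans z1.
Qed.

End RealSide.

Section Transfer.
Variables (R : realType) (X : topologicalType) (f : X -> R) (g : R -> X).
Hypotheses (fg : cancel f g) (gf : cancel g f).
Variable V : seq nat -> set X.
Hypothesis HV : forall a x, V a x = Iv a (f x).

Lemma fruitV p x : fruit V p x <-> f x = gfun p.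
Proof.
split => H.
- apply: fruit_Iv_eq => n; rewrite -HV; exact: H.
- by move=> n; rewrite HV H; exact: gfun_in.
Qed.

Lemma cutV q m x : Defs.cut V q m x <-> Defs.cut Iv q m (f x).
Proof.
split => -[p Hp Hx]; exists p => //; [rewrite fruit_Iv; exact/fruitV | apply/fruitV; exact: fruit_Iv_eq].
Qed.

Lemma imgV (A : set X) y : (f @` A) y <-> A (g y).
Proof.
split; first by move=> [x Ax <-]; rewrite fg.
by move=> Ay; exists (g y) => //; rewrite gf.
Qed.

Lemma img_cut q m : f @` (Defs.cut V q m `|` [set g (gfun q)]) = Defs.cut Iv q m `|` [set gfun q].
Proof.
apply/seteqP; split => y.
- move/imgV => [/cutV Hc|Hc]; first by left; rewrite gf in Hc.
  by right; move: Hc => /= /(congr1 f); rewrite !gf.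
- move=> H; apply/imgV; case: H => [H|->]; last by right.
  by left; apply/cutV; rewrite gf.
Qed.

Lemma BB_of_open (Hop : forall A : set X, open A <-> sorgenfrey_open (f @` A)) q :
  BB V (g (gfun q)) q.
Proof.
split; [|split].
- by apply/fruitV; rewrite gf.
- by move=> m; apply/Hop; rewrite img_cut; exact: cut_open.
- move=> U /Hop sU Ux.
  have [y' [gy' Hy']] : exists y, gfun q < y /\ [set z | gfun q <= z < y] `<=` f @` U.
    by apply: sU; apply/imgV.
  have e0 : 0 < y' - gfun q by rewrite subr_gt0.
  have [m Hm] := small_m q e0.
  exists m.+1 => w [Hw|->] //.
  move/cutV/cut_sub: Hw => /andP[w1 w2].
  have : (f @` U) (f w).
    apply: Hy'; apply/andP; split; first exact: ltW.
    apply: (lt_le_trans w2); move: Hm; rewrite addrC subrK //.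
  by move/imgV; rewrite fg.
Qed.

Lemma open_of_BB (HB : forall x, exists q, BB V x q) (A : set X) :
  open A <-> sorgenfrey_open (f @` A).
Proof.
split.
- move=> oA y /imgV Ay.
  have [q [bq [_ Hb]]] := HB (g y).
  have [m Hm] := Hb A oA Ay.
  have Eq : y = gfun q by rewrite -(gf y); exact/fruitV.
  exists (H q m); split.
    by have := gfun_in (R:=R) q m.+1; rewrite Iv_mk -Eq => /andP[].
  move=> z Hz; apply/imgV; apply: Hm.
  case: (pselect (z = gfun q)) => [->|nz]; first by right; rewrite -Eq.
  left; apply/cutV; rewrite gf; apply: cut_intv => //; by rewrite -Eq.
- move=> sA.
  pose Cut (x : X) (qm : (nat -> nat) * nat) := Defs.cut V qm.1 qm.2 `|` [set x].
  pose S (x : X) := [set qm | BB V x qm.1 /\ Cut x qm `<=` A].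
  have -> : A = \bigcup_(x in A) \bigcup_(qm in S x) Cut x qm.
    apply/seteqP; split => w.
    + move=> Aw; exists w => //.
      have [q Bq] := HB w.
      have Eq : f w = gfun q by apply/fruitV; case: Bq.
      have [y' [gy' Hy']] := sA (f w) (ex_intro2 _ _ w Aw erefl).
      rewrite Eq in gy' Hy'.
      have e0 : 0 < y' - gfun q by rewrite subr_gt0.
  have [m Hm] := small_m q e0.
      exists (q, m.+1); last by right.
      split => // v [Hv|->] //.
      move/cutV/cut_sub: Hv => /andP[v1 v2].
      have : (f @` A) (f v).
        apply: Hy'; apply/andP; split; first exact: ltW.
        apply: (lt_le_trans v2); move: Hm; rewrite addrC subrK //.
      by move/imgV; rewrite fg.
    + by move=> [x Ax [qm [_ Sq] Hw]]; apply: Sq.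
  apply: bigcup_open => x Ax; apply: bigcup_open => qm [[_ [Hop _]] _].
  exact: Hop.
Qed.

End Transfer.

Lemma dir_left (R : realType) (X : topologicalType) :
  homeomorphic_to_sorgenfrey R X ->
  exists V : seq nat -> set X, sorgenfrey_base V /\ locally_strict V /\ strict_branches V.
Proof.
move=> [f [[g fg gf] Hop]].
pose V := fun a => f @^-1` (@Iv R a).
have HV : forall a x, V a x = Iv a (f x) by [].
have xq : forall x q, branches V x q -> x = g (gfun q).
  move=> x q /(fruitV HV) <-; by rewrite fg.
have BBq : forall q, BB V (g (gfun q)) q := BB_of_open fg gf HV Hop.
have cov : forall a, V a = \bigcup_(n in [set: nat]) V (rcons a n).
  by move=> a; rewrite /V Iv_cov_eq preimage_bigcup.
have dis : forall a m k, m <> k -> V (rcons a m) `&` V (rcons a k) = set0.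
  by move=> a m k mk; rewrite /V -preimage_setI Iv_disj // preimage_set0.
exists V; split; [split|split].
- move=> a; apply/Hop.
  have -> : f @` V a = Iv a.
    by apply/seteqP; split => y; [move/(imgV fg gf); rewrite /V /= gf | move=> Hy; apply/(imgV fg gf); rewrite /V /= gf].
  exact: Iv_sopen.
- move=> p; exists (g (gfun p)); apply/(fruitV HV); by rewrite gf.
- split => //; by rewrite /V /= preimage_setT.
- move=> x q n Hq; exists q; split => //; rewrite (xq x q Hq); exact: BBq.
- move=> q; exists (g (gfun q)); exact: BBq.
- by split.
- move=> p; exists (g (gfun p)); apply/seteqP; split => x.
  + by move/(fruitV HV) => <-; rewrite /= fg.
  + by move=> /= ->; apply/(fruitV HV); rewrite gf.
Qed.

Lemma dir_right (R : realType) (X : topologicalType) (V : seq nat -> set X) :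
  sorgenfrey_base V -> locally_strict V -> strict_branches V ->
  homeomorphic_to_sorgenfrey R X.
Proof.
move=> [_ _ [V0 Vcov] S1 _] [Vcov' Vdis] Vstr.
have nest : forall a k, V (rcons a k) `<=` V a.
  by move=> a k x Hx; rewrite Vcov; exists k.
have brex : forall x, exists p, fruit V p x.
  move=> x.
  have V0x : V [::] x by rewrite V0.
  have step : forall a, V a x -> exists k, V (rcons a k) x.
    move=> a; rewrite Vcov => -[k _ Hk]; by exists k.
  have [p Hp] := branch_ex V0x step; by exists p.
have [br Hbr] := @boolp.choice _ _ (fun x p => fruit V p x) brex.
have [psi Hpsi] := @boolp.choice _ _ (fun p x => fruit V p = [set x]) Vstr.
have [code Hcode] := @boolp.choice _ _ (fun y p => fruit (Iv (R:=R)) p y) (@Iv_branch R).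
pose f := fun x => gfun (R:=R) (br x).
pose g := fun y => psi (code y).
have psi_in : forall p, fruit V p (psi p) by move=> p; rewrite Hpsi.
have codeK : forall p, code (gfun p) = p.
  move=> p; apply: gfun_inj; apply/esym; exact: fruit_Iv_eq.
have brK : forall p, br (psi p) = p.
  move=> p; apply: (branch_uniq nest Vdis (y := psi p)); [exact: Hbr | exact: psi_in].
have fg : cancel f g.
  move=> x; rewrite /f /g codeK.
  by have := Hbr x; rewrite Hpsi => /= E; rewrite -E.
have gf : cancel g f.
  move=> y; rewrite /f /g brK; apply/esym; exact: fruit_Iv_eq.
have HV : forall a x, V a x = Iv a (f x).
  move=> a x; apply: propext.
  have Ea : a = mkseq (nth 0%N a) (size a) by rewrite mkseq_nth.
  split => Hx.
  - have E := seq_uniq nest Vdis (y := x) (p := nth 0%N a) (q := br x) (n := size a).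
    rewrite Ea E; [exact: gfun_in | by rewrite -Ea | exact: Hbr].
  - have E := Iv_seq_uniq (p := nth 0%N a) (q := br x) (n := size a) (y := f x).
    rewrite Ea E; [exact: Hbr | by rewrite -Ea | exact: gfun_in].
have HB : forall x, exists q, BB V x q.
  move=> x; have [t [Ht _]] := S1 x (br x) 0%N (Hbr x); by exists t.
exists f; split; first by exists g.
move=> A; exact: (open_of_BB fg gf HV HB A).
Qed.

Local Close Scope ring_scope.

Theorem mainTheorem10 (R : realType) (X : topologicalType) :
  hausdorff_space X ->
  ((exists V : seq nat -> set X,
      sorgenfrey_base V /\ locally_strict V /\ strict_branches V)
   <-> homeomorphic_to_sorgenfrey R X).
Proof.
move=> _; split; last exact: dir_left.
move=> [V [H1 [H2 H3]]]; exact: dir_right H1 H2 H3.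
Qed.
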